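(* Let $F$ be a discrete time regulatory network on $[0,1]^d$ satisfying coordinatewise injectivity, let $(V,\mathcal A)$ be its underlying network, let $U\subset V$ be head-independent, and let $W:=V\setminus U$. Then $W$ is essential.
   Context: $V=\{1,\dots,d\}$; $K\in[0,1]^{d\times d}$ with $\sum_iK_{i,j}=1$ for each $j$; $s\in\{-1,0,1\}^{d\times d}$, $T\in[0,1]^{d\times d}$ with $s_{i,j}=0$ iff $K_{i,j}=0$ and $T_{i,j}=0$ iff $K_{i,j}=0$; $a\in[0,1]$; $H(x)=0$ for $x\le0$, $1$ otherwise; $F(x)_j=ax_j+(1-a)\sum_iK_{i,j}H(s_{i,j}(x_i-T_{i,j}))$. Underlying network: $\mathcal A=\{(i,j):K_{i,j}>0\}$. Coordinatewise injectivity: for each $j$, with $\mathcal F_j=\{x\mapsto ax+(1-a)\sum_i\epsilon_iK_{i,j}:\epsilon\in\{0,1\}^d\}$, distinct $f,f'\in\mathcal F_j$ have $f([0,1])\cap f'([0,1])=\emptyset$. Base partition: $\mathcal P_i$ is the set of nonempty level sets of $u\mapsto(H(s_{i,k}(u-T_{i,k})))_{k=1}^d$ on $[0,1]$, $\mathcal P=\{\prod_iI_i:I_i\in\mathcal P_i\}$; $\mathcal P^1=\mathcal P$, $\mathcal P^{t+1}=\{F^{-1}(\mathbf I)\cap\mathbf J\ne\emptyset:\mathbf I\in\mathcal P^t,\mathbf J\in\mathcal P\}$. $\mathcal Q^t=\{F^{t-1}(\mathbf I):\mathbf I\in\mathcal P^t\}$, $\mathcal Q_i^t=\{\Pi_i\mathbf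 J:\mathbf J\in\mathcal Q^t\}$. For $W'\subset V$, a $(W',t)$-specification is $\mathbf S=(S_i)_{i\in W'}$ with $S_i\in\mathcal Q_i^t$; $C(\mathbf S)=\{\mathbf J\in\mathcal Q^t:\Pi_i\mathbf J=S_i\ \forall i\in W'\}$ and $N(\mathbf S)=\#C(\mathbf S)$. $W$ is essential if there is $M\in\mathbb N$ with $N(\mathbf S)\le M$ for all $t\ge1$ and all $(W,t)$-specifications $\mathbf S$. $U$ is head-independent if (1) no arrow with tail in $U$ has head in $U$, and (2) distinct $i,i'\in U$ have $\{j:(i,j)\in\mathcal A\}\cap\{j:(i',j)\in\mathcal A\}=\emptyset$. *)

(* Defs.v *)
From HB Require Import structures.
From mathcomp Require Import all_boot all_order all_algebra.
From mathcomp Require Import boolp classical_sets cardinality reals.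
Set Implicit Arguments. Unset Strict Implicit. Unset Printing Implicit Defensive.
Import Order.TTheory GRing.Theory Num.Theory.
Local Open Scope classical_set_scope.
Local Open Scope ring_scope.

Section RegNet.
Variables (R : realType) (d : nat).

(* points of R^d; V = {1..d} is represented by 'I_d *)
Definition pt := 'I_d -> R.

Definition unit_int : set R := [set u : R | 0 <= u <= 1].
Definition cube : set pt := [set x : pt | forall i, unit_int (x i)].

Definition heav (x : R) : R := if x <= 0 then 0 else 1.

Definition regnet_params (a : R) (K : 'I_d -> 'I_d -> R)
    (s : 'I_d -> 'I_d -> int) (T : 'I_d -> 'I_d -> R) : Prop :=
  (forall i j, 0 <= K i j <= 1) /\
  (forall j, \sum_(i < d) K i j = 1) /\
  (forall i j, s i j \in [:: (-1)%R; 0%R; 1%R]) /\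
  (forall i j, s i j = 0 <-> K i j = 0) /\
  (forall i j, 0 <= T i j <= 1) /\
  (forall i j, T i j = 0 <-> K i j = 0) /\
  (0 <= a <= 1).

Variables (a : R) (K : 'I_d -> 'I_d -> R) (s : 'I_d -> 'I_d -> int)
  (T : 'I_d -> 'I_d -> R).

Definition regF (x : pt) : pt :=
  fun j => a * x j + (1 - a) * \sum_(i < d) K i j * heav ((s i j)%:~R * (x i - T i j)).

Definition arrow (i j : 'I_d) : Prop := 0 < K i j.

Definition coord_fun (j : 'I_d) (e : 'I_d -> bool) : R -> R :=
  fun x => a * x + (1 - a) * \sum_(i < d) (e i)%:R * K i j.

Definition coordinatewise_injective : Prop :=
  forall (j : 'I_d) (e e' : 'I_d -> bool),
    coord_fun j e <> coord_fun j e' ->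
    (coord_fun j e @` unit_int) `&` (coord_fun j e' @` unit_int) = set0.

Definition level_map (i : 'I_d) (u : R) : 'I_d -> R :=
  fun k => heav ((s i k)%:~R * (u - T i k)).

Definition base_part_i (i : 'I_d) : set (set R) :=
  [set A | exists2 u, unit_int u &
     A = [set u' | unit_int u' /\ level_map i u' = level_map i u]].

Definition base_part : set (set pt) :=
  [set B | exists I : 'I_d -> set R,
     (forall i, base_part_i i (I i)) /\ B = [set x : pt | forall i, I i (x i)]].

(* Ppart n = P^(n+1) *)
Fixpoint Ppart (n : nat) : set (set pt) :=
  match n with
  | 0 => base_part
  | n'.+1 => [set B | exists I J, [/\ Ppart n' I, base_part J,
                B = (regF @^-1` I) `&` J & B !=set0]]
  end.

(* Qpart n = Q^(n+1) = { F^n(I) : I in P^(n+1) } *)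
Definition Qpart (n : nat) : set (set pt) :=
  [set Jq | exists2 I, Ppart n I & Jq = iter n regF @` I].

Definition proj (i : 'I_d) (J : set pt) : set R := (fun x : pt => x i) @` J.

Definition Qpart_i (n : nat) (i : 'I_d) : set (set R) :=
  [set A | exists2 J, Qpart n J & A = proj i J].

(* a (W', n+1)-specification: S_i in Q_i^(n+1) for i in W' (values off W' irrelevant) *)
Definition is_spec (W' : {set 'I_d}) (n : nat) (S : 'I_d -> set R) : Prop :=
  forall i, i \in W' -> Qpart_i n i (S i).

Definition Cspec (W' : {set 'I_d}) (n : nat) (S : 'I_d -> set R) : set (set pt) :=
  [set J | Qpart n J /\ forall i, i \in W' -> proj i J = S i].

Definition essential (W : {set 'I_d}) : Prop :=
  exists M : nat, forall (n : nat) (S : 'I_d -> set R),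
    is_spec W n S -> (Cspec W n S #<= `I_M)%card.

Definition head_independent (U : {set 'I_d}) : Prop :=
  (forall i j, i \in U -> j \in U -> ~ arrow i j) /\
  (forall i i', i \in U -> i' \in U -> i != i' ->
     forall j, ~ (arrow i j /\ arrow i' j)).

End RegNet.

(* Main.v *)
Set Warnings "-notation-overridden,-ambiguous-paths,-parsing".
Require Import Defs.
From HB Require Import structures.
From mathcomp Require Import all_boot all_order all_algebra.
From mathcomp Require Import boolp classical_sets cardinality reals.
Import Order.TTheory GRing.Theory Num.Theory.
Local Open Scope ring_scope.
Local Open Scope classical_set_scope.

Section Proof.
Variables (R : realType) (d : nat) (a : R)
    (K : 'I_d -> 'I_d -> R) (s : 'I_d -> 'I_d -> int) (T : 'I_d -> 'I_d -> R)
    (U : {set 'I_d}).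
Hypothesis hp : regnet_params a K s T.

Local Notation F := (regF a K s T).
Definition lev (y : pt R d) : 'I_d -> 'I_d -> R := fun i => level_map s T i (y i).

Lemma heav01 (x : R) : heav x = 0 \/ heav x = 1.
Proof. rewrite /heav; case: ifP => _; by [left|right]. Qed.

Lemma heavE (x : R) : heav x = ((heav x != 0) : bool)%:R.
Proof. by case: (heav01 x) => ->; rewrite ?eqxx ?oner_eq0. Qed.

Lemma heav_ge0 (x : R) : 0 <= heav x <= 1.
Proof. by case: (heav01 x) => ->; rewrite ?lexx ?ler01. Qed.

Lemma FE y j : F y j = a * y j + (1 - a) * \sum_(i < d) K i j * lev y i j.
Proof. by []. Qed.

Lemma cubeF y : cube y -> cube (F y).
Proof.
case: hp => hK [hsum [_ [_ [_ [_ /andP[a0 a1]]]]]].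
move=> cy j; rewrite /unit_int /= FE.
have hS0 : 0 <= \sum_(i < d) K i j * lev y i j.
  apply: sumr_ge0 => i _; apply: mulr_ge0; first by case/andP: (hK i j).
  by case/andP: (heav_ge0 ((s i j)%:~R * (y i - T i j))).
have hS1 : \sum_(i < d) K i j * lev y i j <= 1.
  rewrite -(hsum j); apply: ler_sum => i _.
  have /andP[k0 _] := hK i j; have /andP[_ h1] := heav_ge0 ((s i j)%:~R * (y i - T i j)).
  by rewrite -[X in _ <= X]mulr1; apply: ler_wpM2l.
have /andP[y0 y1] := cy j.
have a1' : 0 <= 1 - a by rewrite subr_ge0.
apply/andP; split.
  by apply: addr_ge0; apply: mulr_ge0.
have h1 : a * y j <= a by rewrite -[X in _ <= X]mulr1; apply: ler_wpM2l.
have h2 : (1 - a) * \sum_(i < d) K i j * lev y i j <= 1 - a.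
  by rewrite -[X in _ <= X]mulr1; apply: ler_wpM2l.
by apply: le_trans (lerD h1 h2) _; rewrite addrC subrK.
Qed.

Lemma cube_iter k y : cube y -> cube (iter k F y).
Proof. by elim: k => //= k IH cy; apply: cubeF; apply: IH. Qed.


Lemma base_char J : base_part s T J ->
  (exists x0, J x0) /\ forall x0, J x0 -> forall x, J x <-> (cube x /\ lev x = lev x0).
Proof.
move=> [I [hI ->]]; split.
  have : forall i, exists u, I i u.
    by move=> i; case: (hI i) => u ui ->; exists u.
  by case/choice => f hf; exists f.
move=> x0 hx0 x; split.
  move=> hx; split.
    by move=> i; case: (hI i) (hx i) => u ui Ei; rewrite Ei => -[].
  apply: funext => i; case: (hI i) (hx i) (hx0 i) => u ui Ei; rewrite Ei /lev.
  by move=> [_ ->] [_ ->].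
move=> [cx lx] i; case: (hI i) (hx0 i) => u ui Ei; rewrite Ei => -[_ l0].
split; first exact: cx.
by rewrite -l0 /=; have := congr1 (fun f => f i) lx.
Qed.

Definition itin n x0 x := cube x /\ forall k, (k <= n)%N -> lev (iter k F x) = lev (iter k F x0).

Lemma Ppart_char n I : Ppart a K s T n I ->
  (exists x0, I x0) /\ forall x0, I x0 -> forall x, I x <-> itin n x0 x.
Proof.
elim: n I => [|n IH] I.
  move=> /base_char [ne h]; split => // x0 hx0 x; apply: iff_trans (h _ hx0 x) _; split.
    by move=> [cx lx]; split => // k; rewrite leqn0 => /eqP ->.
  by move=> [cx lx]; split => //; apply: (lx 0%N).
move=> [I1 [J [hI1 hJ -> [z hz]]]]; split; first by exists z.
move=> x0 [hx01 hx02] x.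
have [_ h1] := IH _ hI1; have [_ h2] := base_char _ hJ.
have e : I1 (F x) /\ J x <-> itin n (F x0) (F x) /\ (cube x /\ lev x = lev x0).
  by split=> -[u v]; split; [apply/(h1 _ hx01)|apply/(h2 _ hx02)| apply/(h1 _ hx01) | apply/(h2 _ hx02)].
apply: iff_trans e _; split.
  move=> [[cFx lFx] [cx lx]]; split => // -[|k] hk //.
  by rewrite !iterSr; apply: lFx.
move=> [cx lx]; split; last by split => //; apply: (lx 0%N).
split; first exact: cubeF.
by move=> k hk; rewrite -!iterSr; apply: lx.
Qed.


Lemma levE y i j : lev y i j = ((lev y i j != 0) : bool)%:R.
Proof. exact: heavE. Qed.

Lemma sum_conv y w : \sum_(i < d) K i w * lev y i w =
  \sum_(i < d) ((lev y i w != 0) : bool)%:R * K i w.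
Proof. by apply: eq_bigr => i _; rewrite mulrC -levE. Qed.

Lemma F_coord y w : F y w = coord_fun a K w (fun i => lev y i w != 0) (y w).
Proof. by rewrite FE /coord_fun sum_conv. Qed.

Hypothesis hinj : coordinatewise_injective a K.

Lemma step (a0 : a != 0) k x x'' w : cube x -> cube x'' ->
  iter k.+1 F x w = iter k.+1 F x'' w ->
  iter k F x w = iter k F x'' w /\
  (a != 1 -> \sum_(i < d) K i w * lev (iter k F x) i w =
             \sum_(i < d) K i w * lev (iter k F x'') i w).
Proof.
move=> cx cx''; rewrite !iterS.
have cy := cube_iter k _ cx; have cy'' := cube_iter k _ cx''.
move: cy cy''; set y := iter k F x; set y'' := iter k F x'' => cy cy''.
rewrite !F_coord => E.
set e := (fun i => lev y i w != 0) in E *.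
set e'' := (fun i => lev y'' i w != 0) in E *.
have fe : coord_fun a K w e = coord_fun a K w e''.
  case: (pselect (coord_fun a K w e = coord_fun a K w e'')) => // NE.
  have h0 := hinj w e e'' NE.
  have : ((coord_fun a K w e @` (@unit_int R)) `&` (coord_fun a K w e'' @` (@unit_int R)))
           (coord_fun a K w e (y w)).
    split; [exists (y w); [apply: cy|] | exists (y'' w); [apply: cy''|]] => //.
  by rewrite h0.
split.
  move: E; rewrite fe /coord_fun => /addIr /(mulfI a0) //.
move=> a1; rewrite !sum_conv.
have := congr1 (fun f => f 0) fe; rewrite /coord_fun !mulr0 !add0r.
by apply: mulfI; rewrite subr_eq0 eq_sym.
Qed.


Hypothesis hhi : head_independent K U.

Lemma main_sub n I I' x0 x0' :
  Ppart a K s T n I -> Ppart a K s T n I' -> I x0 -> I' x0' ->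
  (forall w, w \notin U -> proj w (iter n F @` I) = proj w (iter n F @` I')) ->
  lev (iter n F x0) = lev (iter n F x0') ->
  lev (iter n.-1 F x0) = lev (iter n.-1 F x0') ->
  iter n F @` I `<=` iter n F @` I'.
Proof.
move=> hI hI' hx0 hx0' hproj hLn hLn1.
have [_ cI] := Ppart_char _ _ hI; have [_ cI'] := Ppart_char _ _ hI'.
have cx0 : cube x0 by have [] := (cI x0 hx0 x0).1 hx0.
have memI' : forall x', I' x' -> cube x' /\ forall k, (k <= n)%N ->
    lev (iter k F x') = lev (iter k F x0').
  by move=> x' hx'; have [] := (cI' x0' hx0' x').1 hx'.
have allL_suff : (forall k, (k <= n)%N -> lev (iter k F x0) = lev (iter k F x0')) ->
    iter n F @` I `<=` iter n F @` I'.
  move=> allL _ [x hx <-]; exists x => //; apply/(cI' x0' hx0' x).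
  have [cx lx] := (cI x0 hx0 x).1 hx; split => // k hk.
  by rewrite lx // allL.
case: (eqVneq a 0) => a0.
  destruct n as [|m].
    by apply: allL_suff => k; rewrite leqn0 => /eqP ->.
  move=> _ [x hx <-]; exists x0' => //; rewrite !iterS.
  have [cx lx] := (cI x0 hx0 x).1 hx.
  apply: funext => j; rewrite !FE.
  have -> : lev (iter m F x) = lev (iter m F x0') by rewrite lx // hLn1.
  by rewrite a0 !mul0r !add0r.
apply: allL_suff.
have C : forall m, (m <= n)%N -> forall w, w \notin U ->
    exists2 x', I' x' & iter (n - m) F x0 w = iter (n - m) F x' w.
  elim=> [_ w hw | m IH hm w hw].
    have : proj w (iter n F @` I) (iter n F x0 w).
      by exists (iter n F x0) => //; exists x0.
    rewrite hproj // => -[y [x' hx' <-] e].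
    by exists x'; rewrite ?subn0 ?e.
  have [x' hx' e] := IH (ltnW hm) w hw.
  have cx' := (memI' x' hx').1.
  move: e; rewrite -(subnSK hm) => e.
  have [e1 _] := step a0 _ _ _ w cx0 cx' e.
  by exists x'.
have A : forall k, (k <= n)%N -> forall w, w \notin U ->
    lev (iter k F x0) w = lev (iter k F x0') w.
  move=> k hk w hw; have [x' hx' e] := C (n - k)%N (leq_subr k n) w hw.
  move: e; rewrite subKn // => e.
  rewrite -((memI' x' hx').2 k hk) /lev e //.
have S : forall k, (k < n)%N -> forall w, w \notin U -> a != 1 ->
    \sum_(i < d) K i w * lev (iter k F x0) i w =
    \sum_(i < d) K i w * lev (iter k F x0') i w.
  move=> k hk w hw a1; have [x' hx' e] := C (n - k.+1)%N (leq_subr _ _) w hw.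
  move: e; rewrite subKn // => e.
  have cx' := (memI' x' hx').1.
  have [_ hs] := step a0 k x0 x' w cx0 cx' e.
  by rewrite (hs a1) ((memI' x' hx').2 k (ltnW hk)).
case: hp => hK [hsum [_ [hsK _]]].
have B : forall k, (k <= n)%N -> forall u, u \in U ->
    lev (iter k F x0) u = lev (iter k F x0') u.
  case: (eqVneq a 1) => a1.
    have Fid : forall y, F y = y.
      by move=> y; apply: funext => j; rewrite FE a1 subrr mul0r mul1r addr0.
    have itid : forall k y, iter k F y = y.
      by elim=> // k IH y; rewrite iterS IH Fid.
    by move=> k hk u hu; rewrite !itid; move: hLn; rewrite !itid => ->.
  move=> k; rewrite leq_eqVlt => /orP[/eqP -> | hk] u hu; first by rewrite hLn.
  apply: funext => j.
  case: (eqVneq (K u j) 0) => Kuj.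
    rewrite /lev /level_map.
    have -> : s u j = 0 by apply/hsK.
    by rewrite !mul0r.
  have arr : arrow K u j.
    by rewrite /arrow lt_def Kuj; case/andP: (hK u j).
  have hj : j \notin U.
    by apply/negP => hj; apply: (hhi.1 u j hu hj arr).
  have := S k hk j hj a1.
  rewrite (bigD1 u) //= [X in _ = X](bigD1 u) //=.
  have rest : \sum_(i < d | i != u) K i j * lev (iter k F x0) i j =
              \sum_(i < d | i != u) K i j * lev (iter k F x0') i j.
    apply: eq_bigr => i hi.
    case: (eqVneq (K i j) 0) => Kij; first by rewrite Kij !mul0r.
    have hiU : i \notin U.
      apply/negP => hiU; apply: (hhi.2 u i hu hiU _ j); first by rewrite eq_sym.
      split => //; by rewrite /arrow lt_def Kij; case/andP: (hK i j).
    by rewrite (A k (ltnW hk) i hiU).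
  by rewrite rest => /addIr /(mulfI Kuj).
move=> k hk; apply: funext => i; case: (boolP (i \in U)) => hi; first exact: B.
exact: A.
Qed.

End Proof.
Arguments lev {R d} s T y _ _.
Arguments levE {R d} s T y i j.
Arguments main_sub {R d a K s T U} hp hinj hhi {n I I' x0 x0'}.
Arguments Ppart_char {R d a K s T} hp {n I}.

Lemma lev_code (R : realType) (d : nat) (s : 'I_d -> 'I_d -> int) (T : 'I_d -> 'I_d -> R) (y y' : pt R d) :
  [ffun i => [ffun j => lev s T y i j != 0]] = [ffun i => [ffun j => lev s T y' i j != 0]] ->
  lev s T y = lev s T y'.
Proof.
move=> e; apply: funext => i; apply: funext => j.
have := congr1 (fun c : {ffun 'I_d -> {ffun 'I_d -> bool}} => c i j) e; rewrite /= !ffunE.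
move=> h; rewrite (levE s T y i j) h; exact: esym (levE s T y' i j).
Qed.

Arguments lev_code {R d s T y y'}.

Theorem mainTheorem9 (R : realType) (d : nat) (a : R)
    (K : 'I_d -> 'I_d -> R) (s : 'I_d -> 'I_d -> int) (T : 'I_d -> 'I_d -> R)
    (U : {set 'I_d}) :
  regnet_params a K s T ->
  coordinatewise_injective a K ->
  head_independent K U ->
  essential a K s T (~: U).
Proof.
move=> hp hinj hhi.
pose KT := ({ffun 'I_d -> {ffun 'I_d -> bool}} * {ffun 'I_d -> {ffun 'I_d -> bool}})%type.
have [M hM] : exists M, ([set: KT] #<= `I_M)%card.
  by apply/finite_set_leP; apply: finite_finset.
exists M => n S _.
pose F := regF a K s T.
pose code (x0 : pt R d) : KT :=
  ([ffun i => [ffun j => lev s T (iter n F x0) i j != 0]],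
   [ffun i => [ffun j => lev s T (iter n.-1 F x0) i j != 0]]).
pose haskey (J : set (pt R d)) (k : KT) := exists I x0,
  [/\ Ppart a K s T n I, I x0, J = iter n F @` I & code x0 = k].
pose dec (k : KT) : set (pt R d) :=
  match pselect (exists J, Cspec a K s T (~: U) n S J /\ haskey J k) with
  | left h => proj1_sig (cid h)
  | right _ => set0 end.
have uniq : forall J J' k, Cspec a K s T (~: U) n S J -> haskey J k ->
    Cspec a K s T (~: U) n S J' -> haskey J' k -> J = J'.
  move=> J J' k [_ pJ] [I [x0 [hI hx0 eJ ck]]] [_ pJ'] [I' [x0' [hI' hx0' eJ' ck']]].
  have hpr : forall w, w \notin U -> proj w J = proj w J'.
    by move=> w hw; rewrite pJ ?pJ' // inE.
  have c := ck; rewrite -ck' in c.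
  case: c => c1 c2.
  have l1 := lev_code c1; have l2 := lev_code c2.
  rewrite eJ eJ' in hpr *; apply/seteqP; split.
    by apply: (main_sub hp hinj hhi hI hI' hx0 hx0').
  apply: (main_sub hp hinj hhi hI' hI hx0' hx0) => //.
  by move=> w hw; rewrite hpr.
have sub : Cspec a K s T (~: U) n S `<=` dec @` setT.
  move=> J hJ; have [[I hI eJ] _] := hJ.
  have [[x0 hx0] _] := Ppart_char hp hI.
  exists (code x0) => //.
  have hk : haskey J (code x0) by exists I, x0; split.
  rewrite /dec; case: pselect => [h|nh]; last first.
    by exfalso; apply: nh; exists J.
  have [hJ' hk'] := proj2_sig (cid h).
  exact: (uniq _ _ _ hJ' hk' hJ hk).
apply: card_le_trans (subset_card_le sub) _.
exact: card_le_trans (card_image_le dec setT) hM.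
Qed.
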